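(* Assume $c_i=c>0$, $\gamma_i=\gamma>0$, $\nu_i=\nu>0$, $\rho_i=\rho\in(-1,1)$ for all $i$, and let $z^\star_{s,n},z^\star_{d,n},z^\star_{o,n}$ (the last for $n\ge2$) be the common values of the maximiser of $f$ as defined in the context, viewed as functions of $\gamma_{\rm P}\in(0,\infty)$. Then: (i) $\mathrm{sgn}(z^\star_{s,n})=-\mathrm{sgn}(\rho)$; (ii) for $n\ge2$, $z^\star_{o,n}>0$ for every $\gamma_{\rm P}>0$; and $z^\star_{d,n}>0$ for all $n\ge1$; (iii) $|z^\star_{s,n}|$ is non-increasing in $\gamma_{\rm P}$ (strictly decreasing if $\rho\ne0$) and $z^\star_{s,n}\to0$ as $\gamma_{\rm P}\to\infty$; (iv) for $n\ge2$, $\lim_{\gamma_{\rm P}\to\infty}z^\star_{o,n}=\frac{\gamma}{(n-1)A+\gamma}\in(0,1)$; (v) for all $n\ge1$, $\lim_{\gamma_{\rm P}\to\infty}z^\star_{d,n}=\frac{(n-1)A-(n-2)\gamma}{(n-1)A+\gamma}\in(0,1]$, where $A=\gamma+\frac{1}{c\nu^2}$.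
   Context: Fix an integer $n\ge1$ and parameters $\sigma>0$, $\gamma_{\rm P}>0$, and for each $i\in\{1,\dots,n\}$: $c_i>0$, $\gamma_i>0$, $\nu_i>0$, $\rho_i\in(-1,1)$. Write $\nu=(\nu_1,\dots,\nu_n)^\top$, $\rho=(\rho_1,\dots,\rho_n)^\top$. The variables are a matrix $z^Q=(z^{Q,i,j})_{i,j}\in\mathbb{R}^{n\times n}$ ($i$ row, $j$ column) and a vector $z^S=(z^{S,1},\dots,z^{S,n})^\top\in\mathbb{R}^n$. Define $f:\mathbb{R}^{n\times n}\times\mathbb{R}^n\to\mathbb{R}$ by $$f(z^Q,z^S)=-\frac1n\sum_{i=1}^n\Big(\frac{(z^{Q,i,i})^2}{2c_i}+\frac{\gamma_i}{2}\sum_{j=1}^n\nu_j^2(z^{Q,i,j})^2+\frac{\gamma_i\sigma^2}{2}(z^{S,i})^2+\frac{\gamma_i\sigma}{\sqrt n}z^{S,i}\sum_{j=1}^n\rho_j\nu_jz^{Q,i,j}-\frac{z^{Q,i,i}}{c_i}\Big)-\frac{\gamma_{\rm P}}{2n^2}\sum_{i=1}^n\Big(\Big(\nu_i-\nu_i\sum_{j=1}^nz^{Q,j,i}-\frac{\rho_i\sigma}{\sqrt n}\sum_{j=1}^nz^{S,j}\Big)^2+\frac{(1-\rho_i^2)\sigma^2}{n}\Big(\sum_{j=1}^nz^{S,j}\Big)^2\Big).$$ $f$ has a unique global maximiser $(z^{Q,\star},z^{S,\star})$. In the homogeneous case this maximiser is symmetric: $z^{S,i,\star}=z^\star_{s,n}$,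 $z^{Q,i,i,\star}=z^\star_{d,n}$ for all $i$, and $z^{Q,i,j,\star}=z^\star_{o,n}$ for all $i\ne j$ (when $n\ge2$). *)

(* Defs.v *)
From HB Require Import structures.
From mathcomp Require Import all_boot all_order all_algebra.
From mathcomp Require Import all_classical all_reals all_analysis.
Set Implicit Arguments. Unset Strict Implicit. Unset Printing Implicit Defensive.
Import Order.TTheory GRing.Theory Num.Theory.
Local Open Scope ring_scope.

(* The objective f of the context, with general (heterogeneous) parameters
   c, gam, nu, rho : 'I_n -> R, sigma, gamP : R.
   zQ : 'M[R]_n  (zQ i j = z^{Q,i,j}, i row, j column),
   zS : 'cV[R]_n (zS i 0 = z^{S,i}). *)
Definition fobj (R : realType) (n : nat) (sigma gamP : R)
  (c gam nu rho : 'I_n -> R) (zQ : 'M[R]_n) (zS : 'cV[R]_n) : R :=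
  let N := n%:R in
  let sumS := \sum_(j < n) zS j 0 in
  - (1 / N) * \sum_(i < n)
      ( (zQ i i) ^+ 2 / (2 * c i)
      + gam i / 2 * \sum_(j < n) (nu j) ^+ 2 * (zQ i j) ^+ 2
      + gam i * sigma ^+ 2 / 2 * (zS i 0) ^+ 2
      + gam i * sigma / Num.sqrt N * zS i 0 * \sum_(j < n) rho j * nu j * zQ i j
      - zQ i i / c i )
  - gamP / (2 * N ^+ 2) * \sum_(i < n)
      ( (nu i - nu i * (\sum_(j < n) zQ j i) - rho i * sigma / Num.sqrt N * sumS) ^+ 2
      + (1 - (rho i) ^+ 2) * sigma ^+ 2 / N * sumS ^+ 2 ).

Definition is_global_maximiser (R : realType) (n : nat) (sigma gamP : R)
  (c gam nu rho : 'I_n -> R) (zQ : 'M[R]_n) (zS : 'cV[R]_n) : Prop :=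
  forall (zQ' : 'M[R]_n) (zS' : 'cV[R]_n),
    fobj sigma gamP c gam nu rho zQ' zS' <= fobj sigma gamP c gam nu rho zQ zS.

(* Main.v *)
Require Import Defs.
From HB Require Import structures.
From mathcomp Require Import all_boot all_order all_algebra.
From mathcomp Require Import all_classical all_reals all_analysis.
Import Order.TTheory GRing.Theory Num.Theory.
Import numFieldNormedType.Exports.
Local Open Scope classical_set_scope.
Local Open Scope ring_scope.

From mathcomp Require Import ring lra.
Set Implicit Arguments. Unset Strict Implicit. Unset Printing Implicit Defensive.

Definition qs {R : realType} {n} (d o : R) (i j : 'I_n) := if i == j then d else o.

Lemma sum_const {R : realType} n (x : R) : \sum_(j < n) x = n%:R * x.
Proof. by rewrite sumr_const card_ord mulr_natl. Qed.

Lemma sumQs {R : realType} n (d o : R) (i : 'I_n) (y : 'I_n -> R) :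
  \sum_j qs d o i j * y j = o * \sum_j y j + (d - o) * y i.
Proof.
rewrite (bigD1 i) //= [in RHS](bigD1 i) //= /qs eqxx mulrDr.
under eq_bigr => j hj do rewrite eq_sym (negbTE hj).
rewrite -mulr_sumr; ring.
Qed.

Lemma sumQsT {R : realType} n (d o : R) (i : 'I_n) (y : 'I_n -> R) :
  \sum_j qs d o j i * y j = o * \sum_j y j + (d - o) * y i.
Proof.
rewrite -sumQs; apply: eq_bigr => j _; by rewrite /qs eq_sym.
Qed.

Definition Usum {R : realType} n (sigma c gam nu rho : R) (M : 'M[R]_n) (S : 'cV[R]_n) :=
  \sum_(i < n)
      ( (M i i) ^+ 2 / (2 * c)
      + gam / 2 * \sum_(j < n) nu ^+ 2 * (M i j) ^+ 2
      + gam * sigma ^+ 2 / 2 * (S i 0) ^+ 2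
      + gam * sigma / Num.sqrt (n%:R) * S i 0 * \sum_(j < n) rho * nu * M i j
      - M i i / c ).

Definition Vsum {R : realType} n (sigma nu rho : R) (M : 'M[R]_n) (S : 'cV[R]_n) :=
  \sum_(i < n)
      ( (nu - nu * (\sum_(j < n) M j i) - rho * sigma / Num.sqrt (n%:R) * \sum_(j < n) S j 0) ^+ 2
      + (1 - rho ^+ 2) * sigma ^+ 2 / n%:R * (\sum_(j < n) S j 0) ^+ 2 ).

Lemma fobjE {R : realType} n (sigma g c gam nu rho : R) (M : 'M[R]_n) (S : 'cV[R]_n) :
  fobj sigma g (fun _ => c) (fun _ => gam) (fun _ => nu) (fun _ => rho) M S
  = - (1 / n%:R) * Usum sigma c gam nu rho M S - g / (2 * n%:R ^+ 2) * Vsum sigma nu rho M S.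
Proof. by []. Qed.

Lemma Usum_expand {R : realType} n (sigma c gam nu rho d o a : R)
  (D : 'I_n -> 'I_n -> R) (e : 'I_n -> R) (hc : c != 0) (hm : Num.sqrt (n%:R : R) != 0) :
  let m := Num.sqrt (n%:R : R) in
  let T := n%:R * o + (d - o) in
  Usum sigma c gam nu rho (\matrix_(i < n, j < n) (qs d o i j + D i j)) (\col_(i < n) (a + e i))
  = Usum sigma c gam nu rho (\matrix_(i < n, j < n) qs d o i j) (\col_(i < n) a)
  + \sum_i ((d - 1) / c * D i i + gam * nu ^+ 2 * (o * \sum_j D i j + (d - o) * D i i)
            + gam * sigma ^+ 2 * a * e i
            + gam * sigma / m * (a * \sum_j rho * nu * D i j + e i * rho * nu * T))
  + \sum_i (D i i ^+ 2 / (2 * c) + gam / 2 * \sum_j nu ^+ 2 * D i j ^+ 2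
            + gam * sigma ^+ 2 / 2 * e i ^+ 2
            + gam * sigma / m * e i * \sum_j rho * nu * D i j).
Proof.
move=> m T; rewrite /Usum -!big_split /=; apply: eq_bigr => i _.
rewrite !mxE.
have qii : qs d o i i = d by rewrite /qs eqxx.
have h1 : \sum_j nu ^+ 2 * (\matrix_(i0, j0) (qs d o i0 j0 + D i0 j0)) i j ^+ 2
   = \sum_j nu ^+ 2 * qs d o i j ^+ 2 + 2 * nu ^+ 2 * (\sum_j qs d o i j * D i j)
     + \sum_j nu ^+ 2 * D i j ^+ 2.
  rewrite mulr_sumr -!big_split /=; apply: eq_bigr => j _; rewrite mxE; ring.
have h2 : \sum_j nu ^+ 2 * (\matrix_(i0, j0) qs d o i0 j0) i j ^+ 2
   = \sum_j nu ^+ 2 * qs d o i j ^+ 2.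
  by apply: eq_bigr => j _; rewrite mxE.
have h3 : \sum_j rho * nu * (\matrix_(i0, j0) (qs d o i0 j0 + D i0 j0)) i j
   = rho * nu * T + \sum_j rho * nu * D i j.
  transitivity (rho * nu * (\sum_j qs d o i j * 1) + \sum_j rho * nu * D i j).
    rewrite mulr_sumr -big_split /=; apply: eq_bigr => j _; rewrite mxE; ring.
  by rewrite sumQs sum_const /T; ring.
have h4 : \sum_j rho * nu * (\matrix_(i0, j0) qs d o i0 j0) i j = rho * nu * T.
  transitivity (rho * nu * (\sum_j qs d o i j * 1)).
    rewrite mulr_sumr; apply: eq_bigr => j _; rewrite mxE; ring.
  by rewrite sumQs sum_const /T; ring.
rewrite h1 h2 h3 h4 sumQs qii.
rewrite -/m; field; by rewrite /m hm hc.
Qed.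

Lemma Vsum_expand {R : realType} n (sigma nu rho d o a : R)
  (D : 'I_n -> 'I_n -> R) (e : 'I_n -> R) :
  let m := Num.sqrt (n%:R : R) in
  let N := (n%:R : R) in
  let T := N * o + (d - o) in
  let E := nu - nu * T - rho * sigma / m * (N * a) in
  let sp := \sum_j e j in
  Vsum sigma nu rho (\matrix_(i < n, j < n) (qs d o i j + D i j)) (\col_(i < n) (a + e i))
  = Vsum sigma nu rho (\matrix_(i < n, j < n) qs d o i j) (\col_(i < n) a)
  + \sum_i (- 2 * E * (nu * \sum_j D j i + rho * sigma / m * sp)
            + (1 - rho ^+ 2) * sigma ^+ 2 / N * (2 * (N * a) * sp))
  + \sum_i ((nu * \sum_j D j i + rho * sigma / m * sp) ^+ 2
            + (1 - rho ^+ 2) * sigma ^+ 2 / N * sp ^+ 2).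
Proof.
move=> m N T E sp; rewrite /Vsum -!big_split /=.
have hS1 : \sum_j (\col_(i < n) (a + e i)) j 0 = N * a + sp.
  rewrite /sp /N -sum_const -big_split /=; apply: eq_bigr => j _; by rewrite mxE.
have hS2 : \sum_j (\col_(i < n) a) j 0 = N * a.
  rewrite /N -sum_const; apply: eq_bigr => j _; by rewrite mxE.
rewrite hS1 hS2; apply: eq_bigr => i _.
have h1 : \sum_j (\matrix_(i0 < n, j0 < n) (qs d o i0 j0 + D i0 j0)) j i
   = T + \sum_j D j i.
  transitivity (\sum_j qs d o j i * 1 + \sum_j D j i).
    rewrite -big_split /=; apply: eq_bigr => j _; rewrite mxE; ring.
  by rewrite sumQsT sum_const /T; ring.
have h2 : \sum_j (\matrix_(i0 < n, j0 < n) qs d o i0 j0) j i = T.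
  transitivity (\sum_j qs d o j i * 1).
    apply: eq_bigr => j _; rewrite mxE; ring.
  by rewrite sumQsT sum_const /T; ring.
rewrite h1 h2 -/m -/N /E. ring.
Qed.


Definition AA {R : realType} (c1 gam : R) := gam + c1.
Definition D0 {R : realType} (N c1 gam : R) := (N - 1) * AA c1 gam + gam.
Definition c2 {R : realType} (N c1 gam rho : R) :=
  (1 - rho ^+ 2) * N * AA c1 gam + rho ^+ 2 * c1.
Definition PP {R : realType} (N c1 gam rho g : R) :=
  g * (1 - rho ^+ 2) * D0 N c1 gam + gam * c2 N c1 gam rho.
Definition oo {R : realType} (N c1 gam rho g : R) :=
  gam * (g * (1 - rho ^+ 2) + rho ^+ 2 * c1) / PP N c1 gam rho g.
Definition dd {R : realType} (N c1 gam rho g : R) :=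
  1 - gam * (1 - oo N c1 gam rho g) / AA c1 gam.
Definition TT {R : realType} (N c1 gam rho g : R) :=
  dd N c1 gam rho g + (N - 1) * oo N c1 gam rho g.
Definition aa {R : realType} (N m sigma c1 gam nu rho g : R) :=
  - (nu / (sigma * m)) * rho * gam * c1 * (g * (N - 1) + gam * N)
   / ((g + gam) * PP N c1 gam rho g).
Definition EE {R : realType} (N m sigma c1 gam nu rho g : R) :=
  nu - nu * TT N c1 gam rho g - rho * sigma * N * aa N m sigma c1 gam nu rho g / m.

Definition pok {R : realType} (N m sigma c1 gam nu rho : R) :=
  (N = m ^+ 2) /\ (0 < m) /\ (1 <= N) /\ (0 < sigma) /\ (0 < c1) /\ (0 < gam) /\
      (0 < nu) /\ (-1 < rho < 1).

Lemma rho2 {R : realType} (rho : R) : -1 < rho < 1 -> 0 < 1 - rho ^+ 2.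
Proof. case/andP => h1 h2; nra. Qed.

Lemma PP_gt0 {R : realType} (N m sigma c1 gam nu rho g : R) :
  pok N m sigma c1 gam nu rho -> 0 < g -> 0 < PP N c1 gam rho g.
Proof.
case=> hNm [hm [hN1 [hs [hc1 [hgam [hnu hr]]]]]] hg; have := rho2 hr.
rewrite /PP /D0 /c2 /AA => h2.
have h3 : 0 < (N - 1) * (gam + c1) + gam by nra.
have h4 : 0 < (1 - rho ^+ 2) * N * (gam + c1) + rho ^+ 2 * c1.
  have : 0 <= rho ^+ 2 * c1 by rewrite mulr_ge0 // ?sqr_ge0 // ltW. 
  have : 0 < (1 - rho ^+ 2) * N * (gam + c1) by rewrite !mulr_gt0 //; lra.
  lra.
have : 0 < g * (1 - rho ^+ 2) * ((N - 1) * (gam + c1) + gam) by rewrite !mulr_gt0.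
have : 0 < gam * ((1 - rho ^+ 2) * N * (gam + c1) + rho ^+ 2 * c1) by rewrite !mulr_gt0.
lra.
Qed.

Lemma F2 {R : realType} (N m sigma c1 gam nu rho g : R) :
  pok N m sigma c1 gam nu rho -> 0 < g ->
  (dd N c1 gam rho g - 1) * c1 + gam * (dd N c1 gam rho g - oo N c1 gam rho g) = 0.
Proof.
move=> hp hg; have hP := PP_gt0 hp hg; case: hp => hNm [hm [hN1 [hs [hc1 [hgam [hnu hr]]]]]].
have hA : gam + c1 != 0 by rewrite gt_eqF //; lra.
rewrite /dd /oo /AA; field; by rewrite hA gt_eqF.
Qed.

Lemma F1 {R : realType} (N m sigma c1 gam nu rho g : R) :
  pok N m sigma c1 gam nu rho -> 0 < g ->
  gam * nu ^+ 2 * oo N c1 gam rho g + gam * sigma * rho * nu * aa N m sigma c1 gam nu rho g / m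
  = g * EE N m sigma c1 gam nu rho g * nu / N.
Proof.
move=> hp hg; have hP := PP_gt0 hp hg; case: hp => hNm [hm [hN1 [hs [hc1 [hgam [hnu hr]]]]]].
have hA : gam + c1 != 0 by rewrite gt_eqF //; lra.
have hgg : g + gam != 0 by rewrite gt_eqF //; lra.
move: hP; rewrite /EE /TT /dd /aa /oo /AA /PP /D0 /c2 /AA hNm => hP.
field; by rewrite hA hgg !gt_eqF.
Qed.

Lemma F3 {R : realType} (N m sigma c1 gam nu rho g : R) :
  pok N m sigma c1 gam nu rho -> 0 < g ->
  gam * sigma ^+ 2 * aa N m sigma c1 gam nu rho g
   + gam * sigma * rho * nu * TT N c1 gam rho g / m
  = g * (EE N m sigma c1 gam nu rho g * rho * sigma / m
         - (1 - rho ^+ 2) * sigma ^+ 2 * aa N m sigma c1 gam nu rho g).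
Proof.
move=> hp hg; have hP := PP_gt0 hp hg; case: hp => hNm [hm [hN1 [hs [hc1 [hgam [hnu hr]]]]]].
have hA : gam + c1 != 0 by rewrite gt_eqF //; lra.
have hgg : g + gam != 0 by rewrite gt_eqF //; lra.
move: hP; rewrite /EE /TT /dd /aa /oo /AA /PP /D0 /c2 /AA hNm => hP.
field; by rewrite hA hgg !gt_eqF.
Qed.


Lemma cs_sum {R : realType} n (y : 'I_n -> R) :
  0 <= n%:R * \sum_j y j ^+ 2 - (\sum_j y j) ^+ 2.
Proof.
case: n y => [|n] y.
  by rewrite !big_ord0 expr0n /= mul0r subrr.
set N := (n.+1%:R : R); set W := \sum_j y j ^+ 2; set S := \sum_j y j.
have hN : 0 < N by rewrite ltr0n.
have h : \sum_j (N * y j - S) ^+ 2 = N * (N * W - S ^+ 2).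
  transitivity (\sum_j (N ^+ 2 * y j ^+ 2 - 2 * N * S * y j + S ^+ 2)).
    by apply: eq_bigr => j _; ring.
  rewrite !big_split /= sumrN sum_const -!mulr_sumr -/W -/S -/N; ring.
have h0 : 0 <= \sum_j (N * y j - S) ^+ 2 by apply: sumr_ge0 => j _; exact: sqr_ge0.
rewrite h in h0; by rewrite -(pmulr_rge0 _ hN).
Qed.

Lemma Qu_lb {R : realType} n (sigma c gam nu rho e : R) (y : 'I_n -> R) (k : 'I_n) :
  0 < sigma -> 0 < c -> 0 < gam -> 0 < nu -> -1 < rho < 1 ->
  let m := Num.sqrt (n%:R : R) in
  let Qu := y k ^+ 2 / (2 * c) + gam / 2 * \sum_j nu ^+ 2 * y j ^+ 2
     + gam * sigma ^+ 2 / 2 * e ^+ 2 + gam * sigma / m * e * \sum_j rho * nu * y j in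
  gam / 2 * (1 - rho ^+ 2) * sigma ^+ 2 * e ^+ 2 <= Qu /\
  (Qu = 0 -> e = 0 /\ forall j, y j = 0).
Proof.
move=> hs hc hgam hnu hr m Qu.
have hN : 0 < (n%:R : R).
  case: n y k {m Qu} => [|n] y [] //.
have hm : 0 < m by rewrite sqrtr_gt0.
have hNm : (n%:R : R) = m ^+ 2 by rewrite sqr_sqrtr // ltW.
have hr2 : 0 < 1 - rho ^+ 2 by case/andP: hr => ? ?; nra.
set W := \sum_j y j ^+ 2; set S := \sum_j y j.
have hcs := cs_sum y; rewrite -/W -/S in hcs.
have hW : 0 <= W by apply: sumr_ge0 => j _; exact: sqr_ge0.
have hQu : Qu - gam / 2 * (1 - rho ^+ 2) * sigma ^+ 2 * e ^+ 2
   = y k ^+ 2 / (2 * c) + gam / 2 * (nu * S / m + rho * sigma * e) ^+ 2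
     + gam * nu ^+ 2 / (2 * n%:R) * (n%:R * W - S ^+ 2).
  rewrite /Qu -!mulr_sumr -/W -/S hNm.
  field; by rewrite !gt_eqF.
have h1 : 0 <= y k ^+ 2 / (2 * c) by rewrite divr_ge0 ?sqr_ge0 // mulr_ge0 // ltW.
have h2 : 0 <= gam / 2 * (nu * S / m + rho * sigma * e) ^+ 2
  by rewrite mulr_ge0 ?sqr_ge0 // divr_ge0 // ltW.
have h3 : 0 <= gam * nu ^+ 2 / (2 * n%:R) * (n%:R * W - S ^+ 2).
  by rewrite mulr_ge0 // divr_ge0 // ?mulr_ge0 // ltW // exprn_gt0.
have hlb : gam / 2 * (1 - rho ^+ 2) * sigma ^+ 2 * e ^+ 2 <= Qu.
  by rewrite -subr_ge0 hQu; apply: addr_ge0 => //; apply: addr_ge0.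
split => // hQ0.
have he : e = 0.
  have hK : 0 < gam / 2 * (1 - rho ^+ 2) * sigma ^+ 2
    by rewrite !mulr_gt0 ?divr_gt0 // exprn_gt0.
  have : gam / 2 * (1 - rho ^+ 2) * sigma ^+ 2 * e ^+ 2 <= 0 by rewrite -hQ0.
  have : 0 <= e ^+ 2 by exact: sqr_ge0.
  move=> h0 hle; apply/eqP; rewrite -sqrf_eq0 eq_le h0 andbT.
  by rewrite -(pmulr_rle0 _ hK).
split => //.
have hQ' : Qu = y k ^+ 2 / (2 * c) + gam * nu ^+ 2 / 2 * W.
  rewrite /Qu he -!mulr_sumr -/W; ring.
have hW0 : W = 0.
  have hK : 0 < gam * nu ^+ 2 / 2 by rewrite divr_gt0 // mulr_gt0 // exprn_gt0.
  have : gam * nu ^+ 2 / 2 * W <= 0.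
    have := h1; rewrite -hQ0 hQ'; lra.
  rewrite (pmulr_rle0 _ hK) => hle; apply/eqP; rewrite eq_le hle hW.
  by [].
move=> j; have := psumr_eq0P (P := xpredT) (F := fun j => y j ^+ 2) (fun j _ => sqr_ge0 (y j)) hW0 (i := j) isT.
by move/eqP; rewrite sqrf_eq0 => /eqP.
Qed.
Lemma pok_inst {R : realType} (n : nat) (sigma c gam nu rho : R) :
  (0 < n)%N -> 0 < sigma -> 0 < c -> 0 < gam -> 0 < nu -> -1 < rho < 1 ->
  pok (n%:R) (Num.sqrt (n%:R)) sigma (1 / (c * nu ^+ 2)) gam nu rho.
Proof.
move=> hn hs hc hgam hnu hr.
have hN : 0 < (n%:R : R) by rewrite ltr0n.
split; first by rewrite sqr_sqrtr // ltW.
split; first by rewrite sqrtr_gt0.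
split; first by rewrite ler1n.
split => //; split; first by rewrite divr_gt0 // mulr_gt0 // exprn_gt0.
by [].
Qed.

Lemma key {R : realType} (n : nat) (sigma c gam nu rho g : R) (hn : (0 < n)%N)
  (hs : 0 < sigma) (hc : 0 < c) (hgam : 0 < gam) (hnu : 0 < nu) (hr : -1 < rho < 1)
  (hg : 0 < g) (D : 'I_n -> 'I_n -> R) (e : 'I_n -> R) :
  let N := (n%:R : R) in let m := Num.sqrt N in let c1 := 1 / (c * nu ^+ 2) in
  let d := dd N c1 gam rho g in let o := oo N c1 gam rho g in
  let a := aa N m sigma c1 gam nu rho g in
  fobj sigma g (fun _ => c) (fun _ => gam) (fun _ => nu) (fun _ => rho)
    (\matrix_(i < n, j < n) (qs d o i j + D i j)) (\col_(i < n) (a + e i))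
  = fobj sigma g (fun _ => c) (fun _ => gam) (fun _ => nu) (fun _ => rho)
    (\matrix_(i < n, j < n) qs d o i j) (\col_(i < n) a)
  - (1 / N * \sum_i (D i i ^+ 2 / (2 * c) + gam / 2 * \sum_j nu ^+ 2 * D i j ^+ 2
            + gam * sigma ^+ 2 / 2 * e i ^+ 2
            + gam * sigma / m * e i * \sum_j rho * nu * D i j)
     + g / (2 * N ^+ 2) * \sum_i ((nu * \sum_j D j i + rho * sigma / m * \sum_j e j) ^+ 2
            + (1 - rho ^+ 2) * sigma ^+ 2 / N * (\sum_j e j) ^+ 2)).
Proof.
move=> N m c1 d o a.
have hp := pok_inst hn hs hc hgam hnu hr.
have hN : 0 < N by rewrite ltr0n.
have hm : 0 < m by rewrite sqrtr_gt0.
rewrite !fobjE Usum_expand ?gt_eqF // Vsum_expand /=.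
set T := N * o + (d - o).
set E := nu - nu * T - rho * sigma / m * (N * a).
set DD := \sum_i D i i.
set Tot := \sum_i \sum_j D i j.
set sp := \sum_j e j.
set X1 := (d - 1) / c + gam * nu ^+ 2 * (d - o).
set X2 := gam * nu ^+ 2 * o + gam * sigma / m * a * rho * nu.
set X3 := gam * sigma ^+ 2 * a + gam * sigma / m * rho * nu * T.
have hLu : \sum_i ((d - 1) / c * D i i + gam * nu ^+ 2 * (o * \sum_j D i j + (d - o) * D i i)
            + gam * sigma ^+ 2 * a * e i
            + gam * sigma / m * (a * \sum_j rho * nu * D i j + e i * rho * nu * T))
   = X1 * DD + X2 * Tot + X3 * sp.
  rewrite /DD /Tot /sp !mulr_sumr -!big_split /=; apply: eq_bigr => i _.
  rewrite -mulr_sumr /X1 /X2 /X3; ring.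
have hLv : \sum_i (- 2 * E * (nu * \sum_j D j i + rho * sigma / m * sp)
            + (1 - rho ^+ 2) * sigma ^+ 2 / N * (2 * (N * a) * sp))
   = - 2 * E * nu * Tot + N * (- 2 * E * rho * sigma / m * sp
            + (1 - rho ^+ 2) * sigma ^+ 2 / N * (2 * (N * a) * sp)).
  have hT : Tot = \sum_i \sum_j D j i by rewrite /Tot exchange_big.
  set K := (- 2 * E * rho * sigma / m * sp + (1 - rho ^+ 2) * sigma ^+ 2 / N * (2 * (N * a) * sp)).
  rewrite hT [in RHS]mulr_sumr.
  have -> : N * K = \sum_(i < n) K by rewrite sum_const.
  rewrite -big_split /=; apply: eq_bigr => i _; rewrite /K; ring.
rewrite hLu hLv.
have e1 : X1 = 0.
  have h : (d - 1) * c1 + gam * (d - o) = 0 := F2 hp hg.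
  rewrite /X1.
  have -> : (d - 1) / c + gam * nu ^+ 2 * (d - o) = nu ^+ 2 * ((d - 1) * c1 + gam * (d - o)).
    rewrite /c1; field; by rewrite !gt_eqF.
  by rewrite h mulr0.
have e2 : X2 = g * E * nu / N.
  have h : gam * nu ^+ 2 * o + gam * sigma * rho * nu * a / m
     = g * EE N m sigma c1 gam nu rho g * nu / N := F1 hp hg.
  have -> : E = EE N m sigma c1 gam nu rho g by rewrite /E /EE /T /TT -/d -/o -/a; ring.
  rewrite -h /X2; ring.
have e3 : X3 = g * (E * rho * sigma / m - (1 - rho ^+ 2) * sigma ^+ 2 * a).
  have h : gam * sigma ^+ 2 * a + gam * sigma * rho * nu * TT N c1 gam rho g / m
     = g * (EE N m sigma c1 gam nu rho g * rho * sigma / m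
         - (1 - rho ^+ 2) * sigma ^+ 2 * a) := F3 hp hg.
  rewrite /X3.
  have -> : E = EE N m sigma c1 gam nu rho g by rewrite /E /EE /T /TT -/d -/o -/a; ring.
  have -> : T = TT N c1 gam rho g by rewrite /T /TT -/d -/o; ring.
  rewrite -h; ring.
rewrite e1 e2 e3.
field; by rewrite !gt_eqF.
Qed.

Lemma unique_max {R : realType} (n : nat) (sigma c gam nu rho g : R) (hn : (0 < n)%N)
  (hs : 0 < sigma) (hc : 0 < c) (hgam : 0 < gam) (hnu : 0 < nu) (hr : -1 < rho < 1)
  (hg : 0 < g) (Q : 'M[R]_n) (S : 'cV[R]_n) :
  let N := (n%:R : R) in let m := Num.sqrt N in let c1 := 1 / (c * nu ^+ 2) in
  let d := dd N c1 gam rho g in let o := oo N c1 gam rho g in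
  let a := aa N m sigma c1 gam nu rho g in
  (forall (zQ' : 'M[R]_n) (zS' : 'cV[R]_n),
    fobj sigma g (fun _ => c) (fun _ => gam) (fun _ => nu) (fun _ => rho) zQ' zS'
    <= fobj sigma g (fun _ => c) (fun _ => gam) (fun _ => nu) (fun _ => rho) Q S) ->
  (forall i j, Q i j = qs d o i j) /\ (forall i, S i 0 = a).
Proof.
move=> N m c1 d o a hmax.
pose D := fun i j => Q i j - qs d o i j.
pose e := fun i => S i 0 - a.
have hQ : Q = \matrix_(i < n, j < n) (qs d o i j + D i j).
  by apply/matrixP => i j; rewrite mxE /D; ring.
have hS : S = \col_(i < n) (a + e i).
  by apply/matrixP => i j; rewrite mxE (ord1 j) /e; ring.
have H := hmax (\matrix_(i < n, j < n) qs d o i j) (\col_(i < n) a).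
rewrite hQ hS (key hn hs hc hgam hnu hr hg) -/N -/m -/c1 -/d -/o -/a in H.
set X := \sum_i _ in H; set Y := \sum_i _ in H.
have hN : 0 < N by rewrite ltr0n.
have hY : 0 <= Y.
  apply: sumr_ge0 => i _; apply: addr_ge0; first exact: sqr_ge0.
  apply: mulr_ge0; last exact: sqr_ge0. apply: divr_ge0; last exact: ltW. apply: mulr_ge0; last exact: sqr_ge0.
  by case/andP: hr => ? ?; nra.
have hQu i := Qu_lb (e i) (fun j => D i j) i hs hc hgam hnu hr.
have hX0 : forall i, 0 <= (D i i ^+ 2 / (2 * c) + gam / 2 * \sum_j nu ^+ 2 * D i j ^+ 2
            + gam * sigma ^+ 2 / 2 * e i ^+ 2
            + gam * sigma / m * e i * \sum_j rho * nu * D i j).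
  move=> i; have [h _] := hQu i; apply: le_trans h.
  rewrite mulr_ge0 ?sqr_ge0 // mulr_ge0 ?sqr_ge0 // mulr_ge0 ?divr_ge0 ?ltW //.
  by case/andP: hr => ? ?; nra.
have hX : 0 <= X by apply: sumr_ge0 => i _; exact: hX0.
have hX' : X = 0.
  have h1 : 0 <= 1 / N * X by rewrite mulr_ge0 // divr_ge0 // ltW.
  have h2 : 0 <= g / (2 * N ^+ 2) * Y.
    apply: mulr_ge0 => //; apply: divr_ge0; [exact: ltW | apply: mulr_ge0 => //; exact: sqr_ge0].
  have h3 : 1 / N * X <= 0 by lra.
  have : X <= 0 by move: h3; rewrite pmulr_rle0 // divr_gt0.
  by move=> hle; apply/eqP; rewrite eq_le hle hX.
have hall i : D i i ^+ 2 / (2 * c) + gam / 2 * \sum_j nu ^+ 2 * D i j ^+ 2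
            + gam * sigma ^+ 2 / 2 * e i ^+ 2
            + gam * sigma / m * e i * \sum_j rho * nu * D i j = 0.
  by apply: (psumr_eq0P (P := xpredT) _ hX') => // k _; exact: hX0.
split.
  move=> i j; have [_ h] := hQu i; have [_ hj] := h (hall i).
  by have := hj j; rewrite /D => /eqP; rewrite subr_eq0 => /eqP.
move=> i; have [_ h] := hQu i; have [hi _] := h (hall i).
by move/eqP: hi; rewrite /e subr_eq0 => /eqP.
Qed.

Lemma inv_cvg0 {R : realType} : (x : R)^-1 @[x --> +oo] --> (0 : R).
Proof.
have -> : (fun x : R => x^-1) = unstable.inv_fun (@id R) by [].
apply/gtr0_cvgV0; last exact: cvg_id.
exact: nbhs_pinfty_gt.
Qed.

Lemma ratlim {R : realType} (p q r s : R) : 0 < r -> 0 < s ->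
  (p * x + q) / (r * x + s) @[x --> +oo] --> p / r.
Proof.
move=> hr hs.
have h1 : (p + q * x^-1) / (r + s * x^-1) @[x --> +oo] --> p / r.
  have hA : (p + q * x^-1) @[x --> +oo] --> p.
    rewrite -[X in _ --> X]addr0 -(mulr0 q).
    apply: cvgD; first exact: cvg_cst.
    by apply: cvgMl_tmp; exact: inv_cvg0.
  have hB : (r + s * x^-1) @[x --> +oo] --> r.
    rewrite -[X in _ --> X]addr0 -(mulr0 s).
    apply: cvgD; first exact: cvg_cst.
    by apply: cvgMl_tmp; exact: inv_cvg0.
  apply: cvgM => //; apply: cvgV => //; by rewrite gt_eqF.
apply: cvg_trans h1; apply: near_eq_cvg.
near=> x.
have hx : 0 < x by near: x; exact: nbhs_pinfty_gt.
rewrite /=. field.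
by rewrite !gt_eqF // addr_gt0 // mulr_gt0.
Unshelve. all: by end_near.
Qed.

Lemma oo_gt0 {R : realType} (N m sigma c1 gam nu rho g : R) :
  pok N m sigma c1 gam nu rho -> 0 < g -> 0 < oo N c1 gam rho g.
Proof.
move=> hp hg; have hP := PP_gt0 hp hg; case: hp => hNm [hm [hN1 [hs [hc1 [hgam [hnu hr]]]]]].
have h2 := rho2 hr.
rewrite /oo divr_gt0 // mulr_gt0 //.
have : 0 <= rho ^+ 2 * c1 by rewrite mulr_ge0 ?sqr_ge0 // ltW.
have : 0 < g * (1 - rho ^+ 2) by rewrite mulr_gt0.
lra.
Qed.

Lemma dd_gt0 {R : realType} (N m sigma c1 gam nu rho g : R) :
  pok N m sigma c1 gam nu rho -> 0 < g -> 0 < dd N c1 gam rho g.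
Proof.
move=> hp hg; have ho := oo_gt0 hp hg; case: hp => hNm [hm [hN1 [hs [hc1 [hgam [hnu hr]]]]]].
have -> : dd N c1 gam rho g = (c1 + gam * oo N c1 gam rho g) / AA c1 gam.
  rewrite /dd /AA; field; rewrite gt_eqF //; lra.
rewrite divr_gt0 // /AA; last lra.
have : 0 < gam * oo N c1 gam rho g by rewrite mulr_gt0.
lra.
Qed.

Definition hh {R : realType} (N c1 gam rho g : R) :=
  (g * (N - 1) + gam * N) / ((g + gam) * PP N c1 gam rho g).

Lemma aa_hh {R : realType} (N m sigma c1 gam nu rho g : R) :
  aa N m sigma c1 gam nu rho g = - (rho * ((nu / (sigma * m)) * gam * c1)) * hh N c1 gam rho g.
Proof. rewrite /aa /hh; rewrite !mulrA; congr (_ * _); ring. Qed.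

Lemma hh_gt0 {R : realType} (N m sigma c1 gam nu rho g : R) :
  pok N m sigma c1 gam nu rho -> 0 < g -> 0 < hh N c1 gam rho g.
Proof.
move=> hp hg; have hP := PP_gt0 hp hg; case: hp => hNm [hm [hN1 [hs [hc1 [hgam [hnu hr]]]]]].
rewrite /hh divr_gt0 //; last by rewrite mulr_gt0 //; lra.
have : 0 <= g * (N - 1) by nra.
have : 0 < gam * N by nra.
lra.
Qed.

Lemma hh_mono {R : realType} (N m sigma c1 gam nu rho g1 g2 : R) :
  pok N m sigma c1 gam nu rho -> 0 < g1 -> g1 <= g2 ->
  hh N c1 gam rho g2 <= hh N c1 gam rho g1 /\
  (g1 < g2 -> hh N c1 gam rho g2 < hh N c1 gam rho g1).
Proof.
move=> hp hg1 hg12.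
have hg2 : 0 < g2 by lra.
have hP1 := PP_gt0 hp hg1; have hP2 := PP_gt0 hp hg2.
case: hp => hNm [hm [hN1 [hs [hc1 [hgam [hnu hr]]]]]].
have h2 := rho2 hr.
have hD0 : 0 < D0 N c1 gam by rewrite /D0 /AA; nra.
set P1 := PP N c1 gam rho g1; set P2 := PP N c1 gam rho g2.
have hPd : P2 - P1 = (g2 - g1) * ((1 - rho ^+ 2) * D0 N c1 gam) by rewrite /P1 /P2 /PP; ring.
have hPle : 0 <= P2 - P1 by rewrite hPd mulr_ge0 // ?subr_ge0 // ltW // mulr_gt0.
set u1 := g1 * (N - 1) + gam * N; set u2 := g2 * (N - 1) + gam * N.
have hu2 : 0 <= u2 by rewrite /u2; nra.
have hdiff : hh N c1 gam rho g1 - hh N c1 gam rho g2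
   = (u2 * (g1 + gam) * (P2 - P1) + gam * (g2 - g1) * P2) / ((g1 + gam) * P1 * ((g2 + gam) * P2)).
  rewrite /hh -/P1 -/P2 -/u1 -/u2 /u1 /u2; field.
  by rewrite !gt_eqF // ?addr_gt0.
have hden : 0 < (g1 + gam) * P1 * ((g2 + gam) * P2) by rewrite !mulr_gt0 // addr_gt0.
have hA : 0 <= u2 * (g1 + gam) * (P2 - P1) by rewrite !mulr_ge0 // ltW // addr_gt0.
split.
  rewrite -subr_ge0 hdiff; apply: divr_ge0; last exact: ltW. apply: addr_ge0 => //.
  by apply: mulr_ge0; [apply: mulr_ge0; [exact: ltW | rewrite subr_ge0] | exact: ltW].
move=> hlt; rewrite -subr_gt0 hdiff divr_gt0 //.
have : 0 < gam * (g2 - g1) * P2 by rewrite !mulr_gt0 // subr_gt0.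
lra.
Qed.

Lemma oo_lim {R : realType} (N m sigma c1 gam nu rho : R) :
  pok N m sigma c1 gam nu rho ->
  oo N c1 gam rho x @[x --> +oo] --> gam / D0 N c1 gam.
Proof.
move=> hp; have hp' := hp; case: hp' => hNm [hm [hN1 [hs [hc1 [hgam [hnu hr]]]]]].
have h2 := rho2 hr.
have hD0 : 0 < D0 N c1 gam by rewrite /D0 /AA; nra.
have hc2 : 0 < c2 N c1 gam rho.
  rewrite /c2 /AA.
  have : 0 <= rho ^+ 2 * c1 by rewrite mulr_ge0 ?sqr_ge0 // ltW.
  have : 0 < (1 - rho ^+ 2) * N * (gam + c1) by rewrite !mulr_gt0 //; lra.
  lra.
have -> : gam / D0 N c1 gam = (gam * (1 - rho ^+ 2)) / ((1 - rho ^+ 2) * D0 N c1 gam).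
  by field; rewrite !gt_eqF.
have -> : oo N c1 gam rho = fun x => ((gam * (1 - rho ^+ 2)) * x + gam * (rho ^+ 2 * c1))
     / (((1 - rho ^+ 2) * D0 N c1 gam) * x + gam * c2 N c1 gam rho).
  by apply: funext => x; rewrite /oo /PP; congr (_ / _); ring.
apply: ratlim; by rewrite mulr_gt0.
Qed.

Lemma dd_lim {R : realType} (N m sigma c1 gam nu rho : R) :
  pok N m sigma c1 gam nu rho ->
  dd N c1 gam rho x @[x --> +oo] --> 1 - gam * (1 - gam / D0 N c1 gam) / AA c1 gam.
Proof.
move=> hp; have ho := oo_lim hp.
apply: cvgD; first exact: cvg_cst.
apply: cvgN; apply: cvgMr_tmp; apply: cvgMl_tmp.
apply: cvgD; first exact: cvg_cst.
exact: cvgN.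
Qed.

Lemma aa_lim {R : realType} (N m sigma c1 gam nu rho : R) :
  pok N m sigma c1 gam nu rho ->
  aa N m sigma c1 gam nu rho x @[x --> +oo] --> (0 : R).
Proof.
move=> hp; have hp' := hp; case: hp' => hNm [hm [hN1 [hs [hc1 [hgam [hnu hr]]]]]].
have h2 := rho2 hr.
have hD0 : 0 < D0 N c1 gam by rewrite /D0 /AA; nra.
have hc2 : 0 < c2 N c1 gam rho.
  rewrite /c2 /AA.
  have : 0 <= rho ^+ 2 * c1 by rewrite mulr_ge0 ?sqr_ge0 // ltW.
  have : 0 < (1 - rho ^+ 2) * N * (gam + c1) by rewrite !mulr_gt0 //; lra.
  lra.
set K := - (rho * ((nu / (sigma * m)) * gam * c1)).
have h1 : ((N - 1) * x + gam * N) / (1 * x + gam) @[x --> +oo] --> (N - 1) / 1.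
  by apply: ratlim.
have h3 : (0 * x + 1) / (((1 - rho ^+ 2) * D0 N c1 gam) * x + gam * c2 N c1 gam rho)
     @[x --> +oo] --> 0 / ((1 - rho ^+ 2) * D0 N c1 gam).
  by apply: ratlim; rewrite ?mulr_gt0.
have h4 : K * (((N - 1) * x + gam * N) / (1 * x + gam)
     * ((0 * x + 1) / (((1 - rho ^+ 2) * D0 N c1 gam) * x + gam * c2 N c1 gam rho)))
     @[x --> +oo] --> K * ((N - 1) / 1 * (0 / ((1 - rho ^+ 2) * D0 N c1 gam))).
  by apply: cvgMl_tmp; apply: cvgM.
rewrite mul0r mulr0 mulr0 in h4.
apply: cvg_trans h4; apply: near_eq_cvg; near=> x.
have hx : 0 < x by near: x; exact: nbhs_pinfty_gt.
have hP := PP_gt0 hp hx.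
rewrite /= aa_hh -/K /hh; congr (_ * _).
move: hP; rewrite /PP => hP.
field; by rewrite !gt_eqF // addr_gt0.
Unshelve. all: by end_near.
Qed.

Theorem mainTheorem3 (R : realType) (n : nat) (hn : (0 < n)%N)
  (sigma c gam nu rho : R)
  (hsigma : 0 < sigma) (hc : 0 < c) (hgam : 0 < gam) (hnu : 0 < nu)
  (hrho1 : -1 < rho) (hrho2 : rho < 1)
  (Z : R -> 'M[R]_n * 'cV[R]_n)
  (hZ : forall gamP : R, 0 < gamP ->
     is_global_maximiser sigma gamP (fun _ => c) (fun _ => gam)
       (fun _ => nu) (fun _ => rho) (Z gamP).1 (Z gamP).2) :
  let A := gam + 1 / (c * nu ^+ 2) in
  let N := (n%:R : R) in
  (* (i) *)
  (forall gamP : R, 0 < gamP -> forall i : 'I_n,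
     Num.sg ((Z gamP).2 i 0) = - Num.sg rho) /\
  (* (ii) *)
  (forall gamP : R, 0 < gamP -> forall i j : 'I_n, i != j ->
     0 < (Z gamP).1 i j) /\
  (forall gamP : R, 0 < gamP -> forall i : 'I_n, 0 < (Z gamP).1 i i) /\
  (* (iii) *)
  (forall i : 'I_n, forall g1 g2 : R, 0 < g1 -> g1 <= g2 ->
     `|(Z g2).2 i 0| <= `|(Z g1).2 i 0|) /\
  (rho != 0 -> forall i : 'I_n, forall g1 g2 : R, 0 < g1 -> g1 < g2 ->
     `|(Z g2).2 i 0| < `|(Z g1).2 i 0|) /\
  (forall i : 'I_n, (Z gP).2 i 0 @[gP --> +oo] --> (0 : R)) /\
  (* (iv) *)
  (forall i j : 'I_n, i != j ->
     (Z gP).1 i j @[gP --> +oo] --> gam / ((N - 1) * A + gam)) /\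
  ((1 < n)%N -> 0 < gam / ((N - 1) * A + gam) < 1) /\
  (* (v) *)
  (forall i : 'I_n,
     (Z gP).1 i i @[gP --> +oo] -->
       ((N - 1) * A - (N - 2) * gam) / ((N - 1) * A + gam)) /\
  (0 < ((N - 1) * A - (N - 2) * gam) / ((N - 1) * A + gam) <= 1).
Proof.
move=> A N.
have hr : -1 < rho < 1 by rewrite hrho1 hrho2.
set m := Num.sqrt N.
set c1 := 1 / (c * nu ^+ 2).
have hp : pok N m sigma c1 gam nu rho := pok_inst hn hsigma hc hgam hnu hr.
have hN : 0 < N by rewrite ltr0n.
have hN1 : 1 <= N by rewrite ler1n.
have hm : 0 < m by rewrite sqrtr_gt0.
have hc1 : 0 < c1 by rewrite divr_gt0 // mulr_gt0 // exprn_gt0.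
have hAA : A = AA c1 gam by [].
have hApos : 0 < A by rewrite hAA /AA; lra.
have hD0 : D0 N c1 gam = (N - 1) * A + gam by [].
have hD0pos : 0 < (N - 1) * A + gam by nra.
have hZQ g (hg : 0 < g) i j : (Z g).1 i j = qs (dd N c1 gam rho g) (oo N c1 gam rho g) i j
  := (unique_max hn hsigma hc hgam hnu hr hg (hZ g hg)).1 i j.
have hZS g (hg : 0 < g) i : (Z g).2 i 0 = aa N m sigma c1 gam nu rho g
  := (unique_max hn hsigma hc hgam hnu hr hg (hZ g hg)).2 i.
have hK : 0 < (nu / (sigma * m)) * gam * c1.
  by apply: mulr_gt0 => //; apply: mulr_gt0 => //; apply: divr_gt0 => //; exact: mulr_gt0.
split.
  move=> g hg i; rewrite hZS // aa_hh sgrM sgrN sgrM (gtr0_sg hK) (gtr0_sg (hh_gt0 hp hg)).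
  by rewrite !mulr1.
split.
  move=> g hg i j hij; rewrite hZQ // /qs (negbTE hij); exact: oo_gt0 hp hg.
split.
  move=> g hg i; rewrite hZQ // /qs eqxx; exact: dd_gt0 hp hg.
split.
  move=> i g1 g2 hg1 hle.
  have hg2 : 0 < g2 by lra.
  rewrite !hZS // !aa_hh (normrM _ (hh N c1 gam rho g1)) (normrM _ (hh N c1 gam rho g2)).
  rewrite (gtr0_norm (hh_gt0 hp hg1)) (gtr0_norm (hh_gt0 hp hg2)).
  apply: ler_wpM2l; first exact: normr_ge0.
  exact: (hh_mono hp hg1 hle).1.
split.
  move=> hrho i g1 g2 hg1 hlt.
  have hg2 : 0 < g2 by lra.
  rewrite !hZS // !aa_hh (normrM _ (hh N c1 gam rho g1)) (normrM _ (hh N c1 gam rho g2)).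
  rewrite (gtr0_norm (hh_gt0 hp hg1)) (gtr0_norm (hh_gt0 hp hg2)).
  rewrite ltr_pM2l; first exact: (hh_mono hp hg1 (ltW hlt)).2.
  by rewrite normr_gt0 oppr_eq0 mulf_neq0 // gt_eqF.
split.
  move=> i; apply: cvg_trans (aa_lim hp); apply: near_eq_cvg; near=> x.
  have hx : 0 < x by near: x; exact: nbhs_pinfty_gt.
  by rewrite /= hZS.
split.
  move=> i j hij; have := oo_lim hp; rewrite hD0 => hlim.
  apply: cvg_trans hlim; apply: near_eq_cvg; near=> x.
  have hx : 0 < x by near: x; exact: nbhs_pinfty_gt.
  by rewrite /= hZQ // /qs (negbTE hij).
split.
  move=> hn1; have hN2 : 1 < N by rewrite ltr1n.
  apply/andP; split; first by rewrite divr_gt0.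
  rewrite ltr_pdivrMr // mul1r.
  have : 0 < (N - 1) * A by rewrite mulr_gt0 // subr_gt0.
  lra.
split.
  move=> i; have := dd_lim hp => hlim.
  have -> : ((N - 1) * A - (N - 2) * gam) / ((N - 1) * A + gam)
       = 1 - gam * (1 - gam / D0 N c1 gam) / AA c1 gam.
    rewrite hD0 -hAA; field; by rewrite !gt_eqF.
  apply: cvg_trans hlim; apply: near_eq_cvg; near=> x.
  have hx : 0 < x by near: x; exact: nbhs_pinfty_gt.
  by rewrite /= hZQ // /qs eqxx.
apply/andP; split.
  rewrite divr_gt0 //.
  have -> : (N - 1) * A - (N - 2) * gam = (N - 1) * (A - gam) + gam by ring.
  have : 0 <= (N - 1) * (A - gam) by rewrite mulr_ge0 // subr_ge0 // ltW // hAA /AA; lra.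
  lra.
rewrite ler_pdivrMr // mul1r.
have : 0 <= (N - 1) * gam by rewrite mulr_ge0 ?subr_ge0 // ltW.
lra.
Unshelve. all: by end_near.
Qed.
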